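(* Let $\pi$ be a finite projective plane of order $q$, and let $A=(\mathcal P,\mathcal L,\mathcal I)$ consist of a set $\mathcal P$ of points of $\pi$ and a set $\mathcal L$ of lines of $\pi$, with the incidence $\mathcal I$ inherited from $\pi$, forming a linear space. Assume there is an integer $n$ with $1<n\le q$ such that no point of $\mathcal P$ is incident with more than $n+1$ lines of $\mathcal L$. Then: (a) if $|\mathcal P|=n^2+n+1$, then either $|\mathcal L|=1$ or $A$ is a subplane of $\pi$; (b) if $|\mathcal P|>n^2+n+1$, then $|\mathcal L|=1$.
   Context: A finite projective plane of order $q$ has $q^2+q+1$ points and lines, $q+1$ points on each line and $q+1$ lines through each point; any two distinct points lie on a unique line and any two lines meet in a unique point. $A$ being a linear space means: any two distinct points of $\mathcal P$ lie on exactly one line of $\mathcal L$, and each line of $\mathcal L$ contains at least two points of $\mathcal P$. A subplane of $\pi$ is a projective plane $(\mathcal P_0,\mathcal L_0,\mathcal I_0)$ with $\mathcal P_0$ a set of points of $\pi$, $\mathcal L_0$ a set of lines of $\pi$, and $\mathcal I_0$ contained in the incidence of $\pi$ (i.e. with inherited incidence, any two points of $\mathcal P_0$ lie on a unique line of $\mathcal L_0$, any two lines of $\mathcal L_0$ meet in a unique point of $\mathcal P_0$, each line of $\mathcal L_0$ has at least three points of $\mathcal P_0$, and there are four points of $\mathcal P_0$ no three on a line of $\mathcal L_0$). *)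

(* Defs.v *)
From mathcomp Require Import all_boot.
Set Implicit Arguments. Unset Strict Implicit. Unset Printing Implicit Defensive.

Definition proj_plane (P L : finType) (inc : P -> L -> bool) (q : nat) : Prop :=
  [/\ #|P| = q ^ 2 + q + 1 /\ #|L| = q ^ 2 + q + 1,
      (forall l : L, #|[set x : P | inc x l]| = q.+1),
      (forall x : P, #|[set l : L | inc x l]| = q.+1),
      (forall x y : P, x != y -> #|[set l : L | inc x l && inc y l]| = 1) &
      (forall l m : L, l != m -> #|[set x : P | inc x l && inc x m]| = 1)].

Definition linear_space (P L : finType) (inc : P -> L -> bool)
    (Ps : {set P}) (Ls : {set L}) : Prop :=
  (forall x y, x \in Ps -> y \in Ps -> x != y ->
      #|[set l in Ls | inc x l && inc y l]| = 1) /\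
  (forall l, l \in Ls -> 2 <= #|[set x in Ps | inc x l]|).

Definition subplane (P L : finType) (inc : P -> L -> bool)
    (Ps : {set P}) (Ls : {set L}) : Prop :=
  [/\ (forall x y, x \in Ps -> y \in Ps -> x != y ->
        #|[set l in Ls | inc x l && inc y l]| = 1),
      (forall l m, l \in Ls -> m \in Ls -> l != m ->
        #|[set x in Ps | inc x l && inc x m]| = 1),
      (forall l, l \in Ls -> 3 <= #|[set x in Ps | inc x l]|) &
      (exists a b c d : P,
        [/\ [&& a \in Ps, b \in Ps, c \in Ps & d \in Ps],
            [&& a != b, a != c, a != d, b != c, b != d & c != d] &
            (forall l, l \in Ls ->
               ~~ [&& inc a l, inc b l & inc c l] /\
               ~~ [&& inc a l, inc b l & inc d l] /\
               ~~ [&& inc a l, inc c l & inc d l] /\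
               ~~ [&& inc b l, inc c l & inc d l])])].

(* Main.v *)
Require Import Defs.
From mathcomp Require Import all_boot zify.
Set Implicit Arguments. Unset Strict Implicit. Unset Printing Implicit Defensive.

Lemma card_sum (T : finType) (A : {set T}) (p : pred T) :
  #|[set z in A | p z]| = \sum_(z in A) (p z : nat).
Proof.
rewrite -sum1_card big_mkcond [RHS]big_mkcond /=.
apply: eq_bigr => z _; rewrite inE; by case: (z \in A); case: (p z).
Qed.

Lemma dcount (P L : finType) (inc : P -> L -> bool) (A : {set P}) (B : {set L}) :
  \sum_(y in A) #|[set m in B | inc y m]| = \sum_(m in B) #|[set y in A | inc y m]|.
Proof.
under eq_bigr do rewrite card_sum.
rewrite exchange_big /=; apply: eq_bigr => m _; by rewrite card_sum.
Qed.

Lemma sum_eq_max (T : finType) (A : {set T}) (f : T -> nat) (k : nat) :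
  (forall i, i \in A -> f i <= k) -> \sum_(i in A) f i = #|A| * k ->
  forall i, i \in A -> f i = k.
Proof.
move=> Hle Hs i iA; apply/eqP; rewrite eqn_leq Hle //=.
rewrite leqNgt; apply/negP => lt.
have : \sum_(j in A) f j < \sum_(j in A) k.
  rewrite (bigD1 i) // [X in _ < X](bigD1 i) //=.
  rewrite -addSn; apply: leq_add => //; apply: leq_sum => j /andP[jA _]; exact: Hle.
by rewrite sum_nat_const Hs ltnn.
Qed.

Lemma cardD1_ge (T : finType) (A : {set T}) x : #|A| <= (#|A :\ x|).+1.
Proof. rewrite (cardsD1 x A); by case: (x \in A). Qed.

Lemma uniq_line (P L : finType) (inc : P -> L -> bool) q :
  proj_plane inc q -> forall (a b : P) (l m : L),
  a != b -> inc a l -> inc b l -> inc a m -> inc b m -> l = m.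
Proof.
case=> _ _ _ H _ a b l m ab al bl am bm.
have /eqP/cards1P [z Hz] := H a b ab.
have : l \in [set z] by rewrite -Hz inE al bl.
have : m \in [set z] by rewrite -Hz inE am bm.
by rewrite !inE => /eqP -> /eqP ->.
Qed.

Lemma off_pt (P L : finType) (inc : P -> L -> bool) q (Ps : {set P}) (l m : L) :
  proj_plane inc q -> l != m -> 2 <= #|[set x in Ps | inc x m]| ->
  exists x, [/\ x \in Ps, inc x m & ~~ inc x l].
Proof.
move=> pp lm /card_gt1P [x [y [xP yP xy]]].
rewrite !inE in xP yP. case/andP: xP => xP xm. case/andP: yP => yP ym.
case xl: (inc x l); last by exists x; rewrite xl.
case yl: (inc y l); last by exists y; rewrite yl.
by rewrite (uniq_line pp xy xl yl xm ym) eqxx in lm.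
Qed.

Lemma dc_pt (P L : finType) (inc : P -> L -> bool) q (Ps : {set P}) (Ls : {set L})
    (x : P) (l : L) :
  proj_plane inc q -> linear_space inc Ps Ls -> x \in Ps -> ~~ inc x l ->
  #|[set y in Ps | inc y l]| =
    \sum_(k in [set k in Ls | inc x k]) #|[set y in [set y in Ps | inc y l] | inc y k]|
  /\ (forall k, k \in [set k in Ls | inc x k] ->
        #|[set y in [set y in Ps | inc y l] | inc y k]| <= 1).
Proof.
move=> pp [LS1 _] xP xl; split.
  rewrite -dcount -sum1_card; apply: eq_bigr => y; rewrite inE => /andP[yP yl].
  have xy : x != y by apply/eqP => E; move: xl; rewrite E yl.
  transitivity #|[set k in Ls | inc x k && inc y k]|; first by rewrite LS1.
  apply: eq_card => k; rewrite !inE.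
  by case: (k \in Ls); case: (inc x k); case: (inc y k).
move=> k; rewrite inE => /andP[kL xk].
rewrite leqNgt; apply/negP => /card_gt1P [a [b [aS bS ab]]].
move: aS bS; rewrite !inE => /andP[/andP[_ al] ak] /andP[/andP[_ bl] bk].
have lk := uniq_line pp ab al bl ak bk. by rewrite lk xk in xl.
Qed.

Theorem lemma4p3 (P L : finType) (inc : P -> L -> bool) (q : nat)
    (Ps : {set P}) (Ls : {set L}) (n : nat) :
  proj_plane inc q ->
  linear_space inc Ps Ls ->
  1 < n -> n <= q ->
  (forall x, x \in Ps -> #|[set l in Ls | inc x l]| <= n.+1) ->
  (#|Ps| = n ^ 2 + n + 1 -> #|Ls| = 1 \/ subplane inc Ps Ls) /\
  (n ^ 2 + n + 1 < #|Ps| -> #|Ls| = 1).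
Proof.
move=> pp LS n1 nq Hdeg.
have [LS1 LS2] := LS.
have e2 : n ^ 2 = n * n by rewrite expnS expn1.
have line_of : forall x y, x \in Ps -> y \in Ps -> x != y ->
    exists k, [/\ k \in Ls, inc x k & inc y k].
  move=> x y xP yP xy.
  have /eqP/cards1P [l Hl] := LS1 x y xP yP xy.
  have : l \in [set l in Ls | inc x l && inc y l] by rewrite Hl set11.
  by rewrite inE => /andP[lL /andP[xl yl]]; exists l.
have Lne : 1 < #|Ps| -> 0 < #|Ls|.
  case/card_gt1P => [x [y [xP yP xy]]].
  have [k [kL _ _]] := line_of x y xP yP xy.
  by apply/card_gt0P; exists k.
have other : 1 < #|Ls| -> forall l, l \in Ls -> exists m, m \in Ls /\ l != m.
  move=> L2 l lL.
  have : 0 < #|Ls :\ l|.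
    move: L2; rewrite (cardsD1 l Ls) lL /=; lia.
  case/card_gt0P => m; rewrite !inE => /andP[ml mL].
  by exists m; split => //; rewrite eq_sym.
have Hline : 1 < #|Ls| -> forall l, l \in Ls -> #|[set x in Ps | inc x l]| <= n.+1.
  move=> L2 l lL.
  have [m [mL lm]] := other L2 l lL.
  have [x [xP xm xl]] := off_pt (Ps:=Ps) pp lm (LS2 m mL).
  have [E B] := dc_pt pp LS xP xl.
  apply: leq_trans (Hdeg x xP).
  rewrite E -[X in _ <= X]sum1_card. by apply: leq_sum.
have Hpt : forall x, x \in Ps ->
   #|Ps| = 1 + \sum_(m in [set m in Ls | inc x m]) #|[set y in Ps :\ x | inc y m]|
   /\ forall m, m \in [set m in Ls | inc x m] ->
        #|[set y in Ps | inc y m]| = 1 + #|[set y in Ps :\ x | inc y m]|.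
  move=> x xP; split.
    rewrite (cardsD1 x Ps) xP -dcount; congr (_ + _); rewrite -sum1_card.
    apply: eq_bigr => y; rewrite !inE => /andP[yx yP].
    have xy : x != y by rewrite eq_sym.
    transitivity #|[set k in Ls | inc x k && inc y k]|; first by rewrite LS1.
    apply: eq_card => k; rewrite !inE.
    by case: (k \in Ls); case: (inc x k); case: (inc y k).
  move=> m; rewrite inE => /andP[mL xm].
  have -> : [set y in Ps :\ x | inc y m] = [set y in Ps | inc y m] :\ x.
    by apply/setP=> y; rewrite !inE andbA.
  by rewrite (cardsD1 x [set y in Ps | inc y m]) !inE xP xm.
have Hbound : 1 < #|Ls| -> forall x, x \in Ps ->
   let S := \sum_(m in [set m in Ls | inc x m]) #|[set y in Ps :\ x | inc y m]| in
   [/\ #|Ps| = 1 + S, S <= #|[set m in Ls | inc x m]| * n,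
       #|[set m in Ls | inc x m]| <= n.+1 &
       forall m, m \in [set m in Ls | inc x m] -> #|[set y in Ps :\ x | inc y m]| <= n].
  move=> L2 x xP S.
  have [E1 E2] := Hpt x xP.
  have B : forall m, m \in [set m in Ls | inc x m] -> #|[set y in Ps :\ x | inc y m]| <= n.
    move=> m mI; have := E2 m mI; have := mI; rewrite inE => /andP[mL _].
    have := Hline L2 m mL; lia.
  split.
  - exact: E1.
  - rewrite /S -sum_nat_const; exact: leq_sum.
  - exact: Hdeg.
  - exact: B.
split; last first.
  move=> Hv.
  have L0 := Lne ltac:(lia).
  have [L1|L2] : #|Ls| = 1 \/ 1 < #|Ls| by lia.
    by [].
  have : 0 < #|Ps| by lia.
  case/card_gt0P => x xP.
  have [E1 E2 E3 _] := Hbound L2 x xP.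
  exfalso; move: E1 E2 E3 Hv.
  set S := \sum_(_ in _) _; set c := #|[set _ in _ | _]|.
  rewrite e2; nia.
move=> Hv.
have L0 := Lne ltac:(lia).
have [L1|L2] : #|Ls| = 1 \/ 1 < #|Ls| by lia.
  by left.
right.
have HL : forall x, x \in Ps -> #|[set m in Ls | inc x m]| = n.+1 /\
    forall m, m \in [set m in Ls | inc x m] -> #|[set y in Ps :\ x | inc y m]| = n.
  move=> x xP.
  have [E1 E2 E3 E4] := Hbound L2 x xP.
  have Hc : #|[set m in Ls | inc x m]| = n.+1.
    move: E1 E2 E3 Hv.
    set S := \sum_(_ in _) _; set c := #|[set _ in _ | _]|.
    rewrite e2; nia.
  split => //.
  apply: sum_eq_max => //. move: E1 Hv; rewrite Hc e2. lia.
have HP : forall m, m \in Ls -> #|[set y in Ps | inc y m]| = n.+1.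
  move=> m mL.
  have : 0 < #|[set y in Ps | inc y m]| by have := LS2 m mL; lia.
  case/card_gt0P => x; rewrite inE => /andP[xP xm].
  have mI : m \in [set m in Ls | inc x m] by rewrite inE mL xm.
  have [_ E2] := Hpt x xP. rewrite (E2 m mI).
  have [_ H] := HL x xP. by rewrite (H m mI).
have Hmeet : forall l m, l \in Ls -> m \in Ls -> l != m ->
    #|[set x in Ps | inc x l && inc x m]| = 1.
  move=> l m lL mL lm.
  have ml : m != l by rewrite eq_sym.
  have [x [xP xl xm]] := off_pt (Ps:=Ps) pp ml (LS2 l lL).
  have [E B] := dc_pt pp LS xP xm.
  have [Hc _] := HL x xP.
  have lI : l \in [set k in Ls | inc x k] by rewrite inE lL xl.
  have := sum_eq_max B _ lI.
  rewrite -E HP // Hc muln1 => /(_ erefl) <-.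
  apply: eq_card => y; rewrite !inE.
  by case: (y \in Ps); case: (inc y l); case: (inc y m).
split => //.
- by move=> l lL; rewrite HP.
have := L0; case/card_gt0P => l lL.
have : 1 < #|[set x in Ps | inc x l]| by rewrite HP //; lia.
case/card_gt1P => a [b [aS bS ab]]; move: aS bS; rewrite !inE => /andP[aP al] /andP[bP bl].
have [m [mL lm]] := other L2 l lL.
have [c [cP cm cl]] := off_pt (Ps:=Ps) pp lm (LS2 m mL).
have ac : a != c by apply/eqP => E; move: cl; rewrite -E al.
have bc : b != c by apply/eqP => E; move: cl; rewrite -E bl.
have [kac [kacL ak ck]] := line_of a c aP cP ac.
have [kbc [kbcL bk ck']] := line_of b c bP cP bc.
have : 0 < #|[set k in Ls | inc c k] :\ kac :\ kbc|.
  have [H _] := HL c cP.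
  have h1 := cardD1_ge [set k in Ls | inc c k] kac.
  have h2 := cardD1_ge ([set k in Ls | inc c k] :\ kac) kbc.
  move: H h1 h2 n1; clear.
  set x1 := #|_|; set x2 := #|_|; set x3 := #|_|; lia.
case/card_gt0P => k; rewrite !inE => /and3P[kkbc kkac /andP[kL ck'']].
have kl : k != l by apply/eqP => E; move: cl; rewrite -E ck''.
have /eqP/cards1P [e He] := Hmeet k l kL lL kl.
have : e \in [set x in Ps | inc x k && inc x l] by rewrite He set11.
rewrite inE => /andP[eP /andP[ek el]].
have : 0 < #|[set y in Ps | inc y k] :\ c :\ e|.
  have H := HP k kL.
  have h1 := cardD1_ge [set y in Ps | inc y k] c.
  have h2 := cardD1_ge ([set y in Ps | inc y k] :\ c) e.
  move: H h1 h2 n1; clear.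
  set x1 := #|_|; set x2 := #|_|; set x3 := #|_|; lia.
case/card_gt0P => d; rewrite !inE => /and3P[de dc /andP[dP dk]].
have dl : ~~ inc d l.
  apply/negP => dl; have := uniq_line pp de dk ek dl el; by move/eqP: kl.
have dkac : ~~ inc d kac.
  apply/negP => dd; have := uniq_line pp dc dk ck'' dd ck; by move/eqP: kkac.
have dkbc : ~~ inc d kbc.
  apply/negP => dd; have := uniq_line pp dc dk ck'' dd ck'; by move/eqP: kkbc.
have ad : a != d by apply/eqP => E; move: dl; rewrite -E al.
have bd : b != d by apply/eqP => E; move: dl; rewrite -E bl.
have cd : c != d by rewrite eq_sym.
exists a, b, c, d; split.
- by rewrite aP bP cP dP.
- by rewrite ab ac ad bc bd cd.
move=> t tL; split; [|split; [|split]]; apply/and3P.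
- case=> hA hB hC; have E := uniq_line pp ab al bl hA hB; by move: cl; rewrite E hC.
- case=> hA hB hD; have E := uniq_line pp ab al bl hA hB; by move: dl; rewrite E hD.
- case=> hA hC hD; have E := uniq_line pp ac ak ck hA hC; by move: dkac; rewrite E hD.
- case=> hB hC hD; have E := uniq_line pp bc bk ck' hB hC; by move: dkbc; rewrite E hD.
Qed.
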